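(* Let $L$ be a countable C-lattice domain in which every element is a join of principal elements. If $L$ is pseudo-Dedekind and Prüfer, then $L$ has finite character.
   Context: A multiplicative lattice is a complete lattice $(L,\le)$ with bottom $0$ and top $1$ which is also a commutative monoid with identity $1$ such that $a(\bigvee_\alpha b_\alpha)=\bigvee_\alpha(ab_\alpha)$ for all $a,b_\alpha\in L$. For $x,y\in L$, $(y:x)=\bigvee\{a\in L: ax\le y\}$. An element $c$ is compact if $c\le\bigvee S$ implies $c\le\bigvee T$ for some finite $T\subseteq S$. A C-lattice is a multiplicative lattice in which $1$ is compact, the product of two compact elements is compact, and every element is a join of compact elements. A proper element $p\ne1$ is prime if $xy\le p$ implies $x\le p$ or $y\le p$; maximal elements are maximal in $L\setminus\{1\}$; $L$ is a domain if $0$ is prime. An element $x$ is principal if $y\wedge zx=((y:x)\wedge z)x$ and $y\vee(z:x)=((yx\vee z):x)$ for all $y,z\in L$. $L$ is pseudo-Dedekind if $(x:a)$ is principal whenever $x,a\in L$ and $x$ is principal; $L$ is Prüfer if every compact element is principal; $L$ has finite character if every nonzero element is below only finitely many maximal elements. *)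

(* Defs.v *)
From Stdlib Require Import List.

Record MultLattice := {
  carrier :> Type;
  le : carrier -> carrier -> Prop;
  sup : (carrier -> Prop) -> carrier;
  mul : carrier -> carrier -> carrier;
  one : carrier;
  le_refl : forall x, le x x;
  le_antisym : forall x y, le x y -> le y x -> x = y;
  le_trans : forall x y z, le x y -> le y z -> le x z;
  sup_ub : forall (S : carrier -> Prop) x, S x -> le x (sup S);
  sup_least : forall (S : carrier -> Prop) y, (forall x, S x -> le x y) -> le (sup S) y;
  mul_assoc : forall a b c, mul a (mul b c) = mul (mul a b) c;
  mul_comm : forall a b, mul a b = mul b a;
  mul_one : forall a, mul a one = a;
  le_one : forall a, le a one;
  mul_sup : forall a (S : carrier -> Prop),
    mul a (sup S) = sup (fun y => exists b, S b /\ y = mul a b)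
}.

Arguments le {m}.
Arguments sup {m}.
Arguments mul {m}.
Arguments one {m}.

Section Defs.
Variable L : MultLattice.

Definition zero : L := sup (fun _ => False).
Definition join (a b : L) : L := sup (fun x => x = a \/ x = b).
Definition meet (a b : L) : L := sup (fun x => le x a /\ le x b).
Definition colon (y x : L) : L := sup (fun a => le (mul a x) y).

Definition compact (c : L) : Prop :=
  forall S : L -> Prop, le c (sup S) ->
    exists l : list L, (forall t, In t l -> S t) /\ le c (sup (fun t => In t l)).

Definition C_lattice : Prop :=
  compact one /\
  (forall a b, compact a -> compact b -> compact (mul a b)) /\
  (forall x : L, exists S : L -> Prop, (forall s, S s -> compact s) /\ x = sup S).

Definition prime (p : L) : Prop :=
  p <> one /\ forall x y, le (mul x y) p -> le x p \/ le y p.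

Definition maximal (m : L) : Prop :=
  m <> one /\ forall x, le m x -> x <> one -> x = m.

Definition is_domain : Prop := prime zero.

Definition principal (x : L) : Prop :=
  forall y z : L,
    meet y (mul z x) = mul (meet (colon y x) z) x /\
    join y (colon z x) = colon (join (mul y x) z) x.

Definition pseudo_Dedekind : Prop :=
  forall x a : L, principal x -> principal (colon x a).

Definition Prufer : Prop := forall c : L, compact c -> principal c.

Definition finite_character : Prop :=
  forall x : L, x <> zero ->
    exists l : list L, forall m, maximal m -> le x m -> In m l.

Definition countable_lattice : Prop :=
  exists f : nat -> L, forall x, exists n, f n = x.

Definition joins_of_principals : Prop :=
  forall x : L, exists S : L -> Prop, (forall s, S s -> principal s) /\ x = sup S.

End Defs.

(* Main.v *)
Require Import Defs.
From Stdlib Require Import List Classical ClassicalEpsilon Arith.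

Lemma sup_mono (L : MultLattice) (S T : L -> Prop) :
  (forall x, S x -> T x) -> le (sup S) (sup T).
Proof. intros H. apply sup_least. intros x Hx. apply sup_ub. auto. Qed.

Lemma zero_le (L : MultLattice) (a : L) : le (zero L) a.
Proof. apply sup_least. intros x []. Qed.

Lemma join_l (L : MultLattice) (a b : L) : le a (join L a b).
Proof. apply sup_ub. auto. Qed.
Lemma join_r (L : MultLattice) (a b : L) : le b (join L a b).
Proof. apply sup_ub. auto. Qed.
Lemma join_least (L : MultLattice) (a b c : L) : le a c -> le b c -> le (join L a b) c.
Proof. intros. apply sup_least. intros x [->| ->]; auto. Qed.
Lemma join_comm (L : MultLattice) (a b : L) : join L a b = join L b a.
Proof. apply le_antisym; apply join_least; auto using join_l, join_r. Qed.

Lemma meet_l (L : MultLattice) (a b : L) : le (meet L a b) a.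
Proof. apply sup_least. intros x [H _]; auto. Qed.
Lemma meet_r (L : MultLattice) (a b : L) : le (meet L a b) b.
Proof. apply sup_least. intros x [_ H]; auto. Qed.
Lemma meet_glb (L : MultLattice) (a b c : L) : le c a -> le c b -> le c (meet L a b).
Proof. intros. apply sup_ub. auto. Qed.
Lemma meet_eq (L : MultLattice) (a b : L) : le a b -> meet L a b = a.
Proof. intros. apply le_antisym. apply meet_l. apply meet_glb; auto using le_refl. Qed.

Lemma eq_one (L : MultLattice) (a : L) : le one a -> a = one.
Proof. intros. apply le_antisym; auto using le_one. Qed.

Lemma one_mul (L : MultLattice) (a : L) : mul one a = a.
Proof. rewrite mul_comm. apply mul_one. Qed.

Lemma mul_join (L : MultLattice) (c a b : L) :
  mul c (join L a b) = join L (mul c a) (mul c b).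
Proof.
  unfold join at 1. rewrite mul_sup. apply le_antisym.
  - apply sup_least. intros y [t [[-> | ->] ->]]; auto using join_l, join_r.
  - apply join_least; apply sup_ub; eauto.
Qed.

Lemma join_eq (L : MultLattice) (a b : L) : le a b -> join L a b = b.
Proof. intros. apply le_antisym. apply join_least; auto using le_refl. apply join_r. Qed.

Lemma mul_mono_r (L : MultLattice) (c a b : L) : le a b -> le (mul c a) (mul c b).
Proof. intros H. replace (mul c b) with (mul c (join L a b)) by (rewrite join_eq; auto). rewrite mul_join. apply join_l. Qed.
Lemma mul_mono_l (L : MultLattice) (c a b : L) : le a b -> le (mul a c) (mul b c).
Proof. intros H. rewrite (mul_comm L a), (mul_comm L b). apply mul_mono_r; auto. Qed.
Lemma mul_le_l (L : MultLattice) (a b : L) : le (mul a b) a.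
Proof. rewrite <- (mul_one L a) at 2. apply mul_mono_r. apply le_one. Qed.
Lemma mul_le_r (L : MultLattice) (a b : L) : le (mul a b) b.
Proof. rewrite mul_comm. apply mul_le_l. Qed.

Lemma colon_spec (L : MultLattice) (a y x : L) : le (mul a x) y -> le a (colon L y x).
Proof. intros. apply sup_ub. auto. Qed.
Lemma colon_mul (L : MultLattice) (y x : L) : le (mul (colon L y x) x) y.
Proof.
  rewrite mul_comm. unfold colon. rewrite mul_sup. apply sup_least.
  intros z [b [Hb ->]]. rewrite mul_comm. auto.
Qed.
Lemma colon_anti (L : MultLattice) (y x x' : L) : le x x' -> le (colon L y x') (colon L y x).
Proof.
  intros H. apply colon_spec. eapply le_trans; [apply mul_mono_r; exact H|]. apply colon_mul.
Qed.

Lemma princ_meet (L : MultLattice) (x y : L) : principal L x -> meet L y x = mul (colon L y x) x.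
Proof.
  intros P. destruct (P y one) as [H _]. rewrite one_mul in H. rewrite H.
  f_equal. apply le_antisym. apply meet_l. apply meet_glb; auto using le_refl, le_one.
Qed.

Lemma princ_cancel (L : MultLattice) (x y : L) : is_domain L -> principal L x -> ~ le x (zero L) ->
  colon L (mul y x) x = y.
Proof.
  intros [_ D] P Hx. destruct (P y (zero L)) as [_ H].
  assert (Hz : colon L (zero L) x = zero L).
  { apply le_antisym; [|apply zero_le]. apply sup_least. intros a Ha.
    destruct (D a x Ha); tauto. }
  rewrite Hz, (join_comm L y), join_eq, (join_comm L (mul y x)), join_eq in H by apply zero_le.
  auto.
Qed.

Lemma compact_zero (L : MultLattice) : compact L (zero L).
Proof. intros S _. exists nil. split. intros t []. apply zero_le. Qed.

Lemma compact_join (L : MultLattice) (a b : L) : compact L a -> compact L b -> compact L (join L a b).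
Proof.
  intros Ca Cb S H.
  destruct (Ca S) as [l1 [H1 H1']]. eapply le_trans; [apply join_l|exact H].
  destruct (Cb S) as [l2 [H2 H2']]. eapply le_trans; [apply join_r|exact H].
  exists (l1 ++ l2). split.
  - intros t Ht. apply in_app_or in Ht. destruct Ht; auto.
  - apply join_least.
    + eapply le_trans; [exact H1'|]. apply sup_mono. intros; apply in_or_app; auto.
    + eapply le_trans; [exact H2'|]. apply sup_mono. intros; apply in_or_app; auto.
Qed.

Lemma aux_list (L : MultLattice) (S : L -> Prop) (b : L) (l : list L) :
  (forall s, S s -> compact L s) ->
  (forall t, In t l -> S t \/ t = b) ->
  exists c, compact L c /\ le c (sup S) /\ le (sup (fun t => In t l)) (join L c b).
Proof.
  intros CS. induction l as [|a l IH]; intros Hl.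
  - exists (zero L). split. apply compact_zero. split. apply zero_le.
    apply sup_least. intros x [].
  - destruct IH as [c [Cc [Hc1 Hc2]]]. { intros t Ht. apply Hl. right. auto. }
    destruct (Hl a (or_introl eq_refl)) as [Sa | ->].
    + exists (join L c a). split. apply compact_join; auto.
      split. apply join_least; auto. apply sup_ub; auto.
      apply sup_least. intros t [-> | Ht].
      * eapply le_trans; [|apply join_l]. apply join_r.
      * eapply le_trans. apply (sup_ub _ (fun t => In t l)). exact Ht. eapply le_trans. exact Hc2.
        apply join_least. eapply le_trans; [|apply join_l]. apply join_l. apply join_r.
    + exists c. split. auto. split. auto.
      apply sup_least. intros t [-> | Ht]. apply join_r.
      eapply le_trans. apply (sup_ub _ (fun t => In t l)). exact Ht. exact Hc2.
Qed.

Lemma sep1 (L : MultLattice) (n b : L) : C_lattice L -> maximal L n -> ~ le b n ->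
  exists c, compact L c /\ le c n /\ join L c b = one.
Proof.
  intros [C1 [_ C3]] [Mn1 Mn2] Hb.
  assert (Hj : join L n b = one).
  { apply NNPP. intros H. apply Hb. rewrite <- (Mn2 _ (join_l L n b) H). apply join_r. }
  destruct (C3 n) as [S [CS HS]].
  destruct (C1 (fun t => S t \/ t = b)) as [l [Hl1 Hl2]].
  { rewrite <- Hj. apply join_least. rewrite HS. apply sup_mono. auto.
    apply sup_ub. auto. }
  destruct (aux_list L S b l CS Hl1) as [c [Cc [Hc1 Hc2]]].
  exists c. split. auto. split. rewrite HS. auto.
  apply eq_one. eapply le_trans; eauto.
Qed.

Lemma sepl (L : MultLattice) (n : L) (B : list L) : C_lattice L -> maximal L n ->
  (forall b, In b B -> ~ le b n) ->
  exists c, compact L c /\ le c n /\ forall b, In b B -> join L c b = one.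
Proof.
  intros CL Mn. induction B as [|b B IH]; intros HB.
  - exists (zero L). split. apply compact_zero. split. apply zero_le. intros b [].
  - destruct IH as [c1 [C1 [H1 H1']]]. intros; apply HB; right; auto.
    destruct (sep1 L n b CL Mn) as [c2 [C2 [H2 H2']]]. apply HB; left; auto.
    exists (join L c1 c2). split. apply compact_join; auto. split. apply join_least; auto.
    intros b' [<- | Hb'].
    + apply eq_one. rewrite <- H2'. apply join_least. eapply le_trans; [|apply join_l]. apply join_r.
      apply join_r.
    + apply eq_one. rewrite <- (H1' b' Hb'). apply join_least. eapply le_trans; [|apply join_l]. apply join_l.
      apply join_r.
Qed.

Definition Yset (L : MultLattice) (p : L) (E : list L) (m : L) : Prop :=
  maximal L m /\ le p m /\ forall e, In e E -> ~ le e m.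

Definition Inf (L : MultLattice) (Y : L -> Prop) : Prop :=
  forall l : list L, exists m, Y m /\ ~ In m l.

Definition Good (L : MultLattice) (p : L) (E : list L) (e : L) : Prop :=
  compact L e /\ le p e /\ e <> one /\ (forall e', In e' E -> join L e e' = one) /\
  Inf L (Yset L p (e :: E)).

Lemma not_inf (L : MultLattice) (Y : L -> Prop) : ~ Inf L Y ->
  exists l, forall m, Y m -> In m l.
Proof.
  intros H. apply NNPP. intros H2. apply H. intros l.
  apply NNPP. intros H3. apply H2. exists l. intros m Ym.
  apply NNPP. intros H4. apply H3. eauto.
Qed.

Lemma step (L : MultLattice) (p : L) (E : list L) : C_lattice L -> compact L p ->
  Inf L (Yset L p E) -> exists e, Good L p E e.
Proof.
  intros CL Cp HI.
  destruct (HI nil) as [n [[Mn [pn En]] _]].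
  destruct (HI (n :: nil)) as [n' [[Mn' [pn' En']] Hnn]].
  assert (Hne : ~ le n' n).
  { intros H. apply Hnn. left. apply (proj2 Mn' n H (proj1 Mn)). }
  destruct (sepl L n (n' :: E) CL Mn) as [d [Cd [dn Hd]]].
  { intros b [<- | Hb]; auto. }
  assert (Hdn' : ~ le d n').
  { intros H. apply (proj1 Mn'). rewrite <- (Hd n' (or_introl eq_refl)).
    symmetry. apply join_eq. auto. }
  destruct (sepl L n' (d :: E) CL Mn') as [d' [Cd' [dn' Hd']]].
  { intros b [<- | Hb]; auto. }
  assert (Hgood : forall c m, compact L c -> le c m -> maximal L m -> le p m ->
             (forall e', In e' E -> join L c e' = one) ->
             compact L (join L p c) /\ le p (join L p c) /\ join L p c <> one /\
             (forall e', In e' E -> join L (join L p c) e' = one)).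
  { intros c m Cc cm Mm pm HE. split. apply compact_join; auto. split. apply join_l.
    split. intros H. apply (proj1 Mm). apply eq_one. rewrite <- H. apply join_least; auto.
    intros e' He'. apply eq_one. rewrite <- (HE e' He'). apply join_least.
    eapply le_trans; [|apply join_l]. apply join_r. apply join_r. }
  destruct (classic (Inf L (Yset L p (join L p d :: E)))) as [I1 | I1].
  { exists (join L p d). destruct (Hgood d n) as [G1 [G2 [G3 G4]]]; auto.
    intros; apply Hd; right; auto.
    repeat split; auto. }
  destruct (classic (Inf L (Yset L p (join L p d' :: E)))) as [I2 | I2].
  { exists (join L p d'). destruct (Hgood d' n') as [G1 [G2 [G3 G4]]]; auto.
    intros; apply Hd'; right; auto.
    repeat split; auto. }
  exfalso.
  destruct (not_inf L _ I1) as [l1 H1]. destruct (not_inf L _ I2) as [l2 H2].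
  destruct (HI (l1 ++ l2)) as [m [[Mm [pm Em]] Hm]].
  assert (A1 : le (join L p d) m).
  { apply NNPP. intros H. apply Hm. apply in_or_app. left. apply H1.
    split. auto. split. auto. intros e [<- | He]; auto. }
  assert (A2 : le (join L p d') m).
  { apply NNPP. intros H. apply Hm. apply in_or_app. right. apply H2.
    split. auto. split. auto. intros e [<- | He]; auto. }
  apply (proj1 Mm). apply eq_one. rewrite <- (Hd' d (or_introl eq_refl)).
  apply join_least; eapply le_trans; try apply join_r; eauto.
Qed.

Definition choose (L : MultLattice) (p : L) (E : list L) : L :=
  epsilon (inhabits one) (Good L p E).

Fixpoint Fl (L : MultLattice) (p : L) (n : nat) : list L :=
  match n with
  | O => nil
  | S k => choose L p (Fl L p k) :: Fl L p k
  end.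

Lemma Fl_inf (L : MultLattice) (p : L) : C_lattice L -> compact L p ->
  Inf L (Yset L p nil) -> forall n, Inf L (Yset L p (Fl L p n)).
Proof.
  intros CL Cp H0 n. induction n as [|n IH]. exact H0.
  simpl. assert (G : Good L p (Fl L p n) (choose L p (Fl L p n))).
  { unfold choose. apply epsilon_spec. apply step; auto. }
  apply G.
Qed.

Lemma Fl_in (L : MultLattice) (p : L) : forall i j, i < j ->
  In (choose L p (Fl L p i)) (Fl L p j).
Proof.
  intros i j. induction j as [|j IH]; intros H. inversion H.
  simpl. inversion H; subst. left; auto. right. apply IH. auto with arith.
Qed.

Theorem proposition3p14 (L : MultLattice) :
  countable_lattice L -> C_lattice L -> is_domain L -> joins_of_principals L ->
  pseudo_Dedekind L -> Prufer L -> finite_character L.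
Proof.
  intros [f Hf] CL Dom _ PD Pr. apply NNPP. intros NFC.
  destruct (not_all_ex_not _ _ NFC) as [x Hx].
  apply imply_to_and in Hx. destruct Hx as [xnz Hx].
  destruct CL as [C1 [C2 C3]] eqn:ECL.
  destruct (C3 x) as [S [CS HS]].
  assert (Hp : exists p, S p /\ p <> zero L).
  { apply NNPP. intros H. apply xnz. rewrite HS. apply le_antisym; [|apply zero_le].
    apply sup_least. intros s Ss. destruct (classic (s = zero L)) as [-> | Hs].
    apply le_refl. exfalso. apply H. eauto. }
  destruct Hp as [p [Sp pnz]].
  assert (Cp : compact L p) by auto.
  assert (Pp : principal L p) by auto.
  assert (px : le p x). { rewrite HS. apply sup_ub. auto. }
  assert (pnz' : ~ le p (zero L)).
  { intros H. apply pnz. apply le_antisym; auto. apply zero_le. }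
  assert (I0 : Inf L (Yset L p nil)).
  { intros l. apply NNPP. intros H. apply Hx. exists l. intros m Mm xm.
    apply NNPP. intros H2. apply H. exists m. split; auto.
    split. auto. split. eapply le_trans; eauto. intros e []. }
  set (e := fun n => choose L p (Fl L p n)).
  assert (Ge : forall n, Good L p (Fl L p n) (e n)).
  { intros n. unfold e, choose. apply epsilon_spec. apply step; auto.
    apply Fl_inf; auto. }
  assert (Pe : forall n, principal L (e n)). { intros n. apply Pr. apply Ge. }
  assert (pe : forall n, le p (e n)). { intros n. apply Ge. }
  assert (e1 : forall n, e n <> one). { intros n. apply Ge. }
  assert (Comax : forall i j, i <> j -> join L (e i) (e j) = one).
  { intros i j Hij. destruct (Nat.lt_total i j) as [H | [H | H]].
    - rewrite join_comm. apply (Ge j). apply Fl_in. auto.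
    - contradiction.
    - apply (Ge i). apply Fl_in. auto. }
  set (D := fun k => ~ le (f k) (e k)).
  set (F := sup (fun y => forall k, D k -> le y (e k))).
  assert (FD : forall k, D k -> le F (e k)).
  { intros k Hk. apply sup_least. auto. }
  assert (pF : le p F). { apply sup_ub. auto. }
  assert (Fnz : ~ le F (zero L)). { intros H. apply pnz'. eapply le_trans; eauto. }
  assert (PF : principal L F).
  { assert (Eq : F = colon L p (colon L p F)).
    { apply le_antisym.
      - apply colon_spec. rewrite mul_comm. apply colon_mul.
      - apply (sup_ub _ (fun y => forall k, D k -> le y (e k))). intros k Hk.
        set (r := colon L p (e k)).
        assert (Pr_r : principal L r) by (apply (PD p); exact Pp).
        assert (pr : le p r). { apply colon_spec. apply mul_le_l. }
        assert (rnz : ~ le r (zero L)). { intros H. apply pnz'. eapply le_trans; eauto. }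
        eapply le_trans. apply colon_anti. apply colon_anti. apply (FD k Hk).
        fold r. apply sup_least. intros a Ha.
        assert (Hp : p = mul r (e k)).
        { rewrite <- (meet_eq L p (e k) (pe k)). apply princ_meet. auto. }
        rewrite <- (princ_cancel L r (e k) Dom Pr_r rnz).
        apply colon_spec. rewrite (mul_comm L (e k)), <- Hp. auto. }
    rewrite Eq. apply (PD p). exact Pp. }
  destruct (Hf F) as [j Hj].
  destruct (classic (D j)) as [Dj | Dj].
  - apply Dj. rewrite Hj. apply FD. auto.
  - assert (Fj : le F (e j)). { rewrite <- Hj. apply NNPP. exact Dj. }
    set (g := colon L F (e j)).
    assert (HF : F = mul g (e j)).
    { rewrite <- (meet_eq L F (e j) Fj). apply princ_meet. auto. }
    assert (gF : le g F).
    { apply sup_ub. intros k Dk.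
      assert (kj : k <> j). { intros ->. contradiction. }
      rewrite <- (mul_one L g), <- (Comax k j kj), mul_join.
      apply join_least. apply mul_le_r. rewrite <- HF. auto. }
    assert (FF : mul (e j) F = mul one F).
    { rewrite one_mul, mul_comm. apply le_antisym. apply mul_le_l.
      rewrite HF at 1. apply mul_mono_l. auto. }
    apply (e1 j).
    rewrite <- (princ_cancel L F (e j) Dom PF Fnz), FF, princ_cancel; auto.
Qed.
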